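(* Let $X$ be a continuum, let $n\geq2$ be an integer, and let $f:X\to X$ be a map. Consider the statements: (1) $f$ is $\triangle$-mixing; (2) $F_n(f)$ is $\triangle$-mixing; (3) $SF_n(f)$ is $\triangle$-mixing. Then (2) implies (1), and (2) implies (3).
   Context: A continuum is a nonempty compact connected metric space. $F_n(X)$ is the set of nonempty subsets of $X$ with at most $n$ points, with the Hausdorff metric topology; $F_1(X)=\{\{x\}:x\in X\}$; $F_n(f)(A)=f(A)$. $SF_n(X)=F_n(X)/F_1(X)$ is the quotient collapsing $F_1(X)$ to a point, $q$ the quotient map, $F_X=q(F_1(X))$, and $SF_n(f)(\chi)=q(F_n(f)(q^{-1}(\chi)))$ for $\chi\neq F_X$, $SF_n(f)(F_X)=F_X$. A map $g:Z\to Z$ is $\triangle$-mixing if for every $m\in\mathbb{N}$ and every infinite set $B\subseteq\mathbb{Z}_+$ there is a dense subset $Y\subseteq Z$ such that for each $y\in Y$ the set $\{(g^k(y),g^{2k}(y),\dots,g^{mk}(y)):k\in B\}$ is dense in $Z^m$. *)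

(* Defs.v *)
From HB Require Import structures.
From mathcomp Require Import all_boot all_order all_algebra finmap generic_quotient.
From mathcomp Require Import all_classical all_reals all_analysis.

Set Implicit Arguments.
Unset Strict Implicit.
Unset Printing Implicit Defensive.

Import Order.TTheory GRing.Theory Num.Theory.

Local Open Scope classical_set_scope.
Local Open Scope ring_scope.

(* Z^m is the product space {ptws 'I_m -> Z}; the tuple                 *)
(* (g^k y, g^{2k} y, ..., g^{mk} y) is  fun i : 'I_m => g^{(i+1)k} y.    *)
Definition tri_mixing (Z : topologicalType) (g : Z -> Z) : Prop :=
  forall (m : nat), (0 < m)%N ->
  forall (B : set nat), infinite_set B ->
  exists Y : set Z, dense Y /\
    forall y, Y y ->
      @dense {ptws 'I_m -> Z}
        [set (fun i : 'I_m => iter ((i.+1) * k)%N g y) | k in B].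

Definition continuum (R : realType) (X : metricType R) : Prop :=
  [set: X] !=set0 /\ compact [set: X] /\ connected [set: X].

Section Hyperspace.
Context {R : realType} (X : metricType R) (n : nat).

Local Open Scope fset_scope.

Definition fnP (A : {fset X}) : bool := (0 < #|` A|)%N && (#|` A| <= n)%N.

Record Fn := MkFn { fn_set :> {fset X}; fn_setP : fnP fn_set }.

HB.instance Definition _ := [isSub for fn_set].
HB.instance Definition _ := [Choice of Fn by <:].

Local Notation d := (@mdist R X).

(* For finite nonempty sets, the Hausdorff
   distance max(max_a min_b d(a,b), max_b min_a d(a,b)) is < e iff every
   point of A is e-close to some point of B and vice versa. *)
Definition hball (A : Fn) (e : R) (B : Fn) : Prop :=
  (forall a, a \in fn_set A -> exists2 b, b \in fn_set B & d a b < e) /\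
  (forall b, b \in fn_set B -> exists2 a, a \in fn_set A & d a b < e).

Let hball_center (A : Fn) (e : R) : 0 < e -> hball A e A.
Proof.
by move=> e0; split=> x xA; exists x => //; rewrite mdistxx.
Qed.

Let hball_sym (A B : Fn) (e : R) : hball A e B -> hball B e A.
Proof.
move=> [h1 h2]; split=> x xB.
  by have [a aA] := h2 x xB; exists a => //; rewrite metric_sym.
by have [b bB] := h1 x xB; exists b => //; rewrite metric_sym.
Qed.

Let hball_triangle (A B C : Fn) (e1 e2 : R) :
  hball A e1 B -> hball B e2 C -> hball A (e1 + e2) C.
Proof.
move=> [h1 h2] [k1 k2]; split=> x xP.
  have [b bB hb] := h1 x xP; have [c cC hc] := k1 b bB.
  exists c => //; apply: le_lt_trans (@metric_triangle _ _ _ b _) _.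
  by rewrite ltrD.
have [b bB hb] := k2 x xP; have [a aA ha] := h2 b bB.
exists a => //; apply: le_lt_trans (@metric_triangle _ _ _ b _) _.
by rewrite ltrD.
Qed.

HB.instance Definition _ := hasNbhs.Build Fn (nbhs_ (entourage_ hball)).
HB.instance Definition _ := @Nbhs_isPseudoMetric.Build R Fn
  (entourage_ hball) erefl hball hball_center hball_sym hball_triangle erefl.

Lemma Fn_map_subproof (f : X -> X) (A : Fn) : fnP [fset f x | x in fn_set A].
Proof.
case: A => A /andP[A0 An] /=; apply/andP; split.
  rewrite cardfs_gt0; move: A0; rewrite cardfs_gt0 => /fset0Pn[x xA].
  by apply/fset0Pn; exists (f x); apply/imfsetP; exists x.
apply: leq_trans An; apply: leq_trans (leq_imfset_card _ _ _) _.
by [].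
Qed.

Definition Fn_map (f : X -> X) (A : Fn) : Fn := MkFn (Fn_map_subproof f A).

(* The symmetric product SF_n(X) = F_n(X) / F_1(X): collapse the
   singletons (the copy of F_1(X)) to one point. *)
Definition sfrel (A B : Fn) : bool :=
  (A == B) || ((#|` fn_set A| == 1)%N && (#|` fn_set B| == 1)%N).

Lemma sfrel_refl : reflexive sfrel.
Proof. by move=> A; rewrite /sfrel eqxx. Qed.

Lemma sfrel_sym : symmetric sfrel.
Proof. by move=> A B; rewrite /sfrel eq_sym andbC. Qed.

Lemma sfrel_trans : transitive sfrel.
Proof.
move=> B A C; rewrite /sfrel.
case/orP=> [/eqP -> //|/andP[hA hB]].
case/orP=> [/eqP <-|/andP[_ hC]]; first by rewrite hA hB orbT.
by rewrite hA hC orbT.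
Qed.

Canonical sfrel_equiv := EquivRel sfrel sfrel_refl sfrel_sym sfrel_trans.

End Hyperspace.

Arguments Fn_map {R X} n f A.

Local Open Scope quotient_scope.

Notation SF X n := (quotient_topology {eq_quot (@sfrel _ X n)}).

(* SF_n(f)(chi) = q(F_n(f)(q^{-1}(chi))) for chi <> F_X, and F_X |-> F_X.
   Written uniformly through a representative of chi: when chi = F_X the
   representative is a singleton {x}, whose image {f x} is again collapsed
   to F_X; otherwise q^{-1}(chi) is the single set repr chi. *)
Definition SF_map {R : realType} {X : metricType R} (n : nat) (f : X -> X)
  (chi : SF X n) : SF X n :=
  \pi_(SF X n) (Fn_map n f (repr chi)).
Arguments SF_map {R X} n f chi.

(* Main.v *)
Require Import Defs.
From HB Require Import structures.
From mathcomp Require Import all_boot all_order all_algebra finmap generic_quotient.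
From mathcomp Require Import all_classical all_reals all_analysis.
Set Implicit Arguments.
Unset Strict Implicit.
Unset Printing Implicit Defensive.
Import Order.TTheory GRing.Theory Num.Theory.
Local Open Scope classical_set_scope.
Local Open Scope ring_scope.

Section S.
Context {R : realType} (X : metricType R) (n : nat).

Lemma seq_ball (s : seq X) (U : set X) : (forall c, c \in s -> nbhs c U) ->
  exists2 e : R, 0 < e & forall c, c \in s -> ball c e `<=` U.
Proof.
elim: s => [|x s IH] hs.
  by exists 1 => // c; rewrite in_nil.
have /IH [e2 e20 h2] : forall c, c \in s -> nbhs c U.
  by move=> c cs; apply: hs; rewrite in_cons cs orbT.
have : nbhs x U by apply: hs; rewrite mem_head.
move=> /nbhs_ballP [e1 e10 h1].
exists (Num.min e1 e2); first by rewrite lt_min e10 e20.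
move=> c; rewrite in_cons => /orP [/eqP ->|cs].
  by apply: subset_trans h1; apply: le_ball; rewrite ge_min lexx.
by apply: subset_trans (h2 _ cs); apply: le_ball; rewrite ge_min lexx orbT.
Qed.

Lemma nbhs_fsub (U : set X) (C : Fn X n) :
  (forall c, c \in fn_set C -> nbhs c U) ->
  nbhs C [set D : Fn X n | forall d, d \in fn_set D -> U d].
Proof.
move=> hC.
have [e e0 he] := @seq_ball (fn_set C) U hC.
apply/nbhs_ballP; exists e => // D [h1 h2] d dD.
have [c cC cd] := h2 d dD.
by apply: (he c cC); rewrite ballEmdist.
Qed.

Lemma prod_nbhsP (I : eqType) (K : I -> topologicalType) (p : prod_topology K)
  (O : set (prod_topology K)) : nbhs p O ->
  exists V : forall i, set (K i), (forall i, nbhs (p i) (V i)) /\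
    (forall q : prod_topology K, (forall i, V i (q i)) -> O q).
Proof.
pose F : set_system (prod_topology K) := [set A | exists V : forall i, set (K i),
   (forall i, nbhs (p i) (V i)) /\ (forall q : prod_topology K, (forall i, V i (q i)) -> A q)].
have FF : Filter F.
  split.
  - by exists (fun=> setT); split => // i; apply: filterT.
  - move=> A B [V [hV hVA]] [W [hW hWB]]; exists (fun i => V i `&` W i); split.
      by move=> i; apply: filterI.
    by move=> q hq; split; [apply: hVA => i; case: (hq i)|apply: hWB => i; case: (hq i)].
  - by move=> A B AB [V [hV hVA]]; exists V; split => // q /hVA; apply: AB.
suff : F --> p by move=> /(_ O) h /h.
apply/cvg_sup => i A /= [_ [[B Bop <-] Bp sBA]].
exists (dfwith (fun j => @setT (K j)) i B); split.
  by move=> j; case: dfwithP => [|k _]; [apply: open_nbhs_nbhs|apply: filterT].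
by move=> q /(_ i); rewrite dfwithin => /= qB; apply: sBA.
Qed.

Lemma prod_nbhs_fin (I : finType) (K : I -> topologicalType) (p : prod_topology K)
  (V : forall i, set (K i)) : (forall i, nbhs (p i) (V i)) ->
  nbhs p [set q : prod_topology K | forall i, V i (q i)].
Proof.
move=> hV.
pose D := [fset i | i in enum I]%fset.
have : nbhs p (\bigcap_(i in [set` D]) (fun i => @proj I K i @^-1` V i) i).
  apply: filter_bigI => i _.
  exact: (@proj_continuous I K i p (V i) (hV i)).
apply: filterS => q hq i; apply: (hq i).
by rewrite /= /D; apply/imfsetP; exists i => //; rewrite mem_enum.
Qed.

Lemma prod_continuous_into (T : topologicalType) (I : Type) (K : I -> topologicalType)
  (h : T -> prod_topology K) : (forall i, continuous (fun t => h t i)) -> continuous h.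
Proof.
move=> hc x; apply/cvg_sup.
move=> i; move: x; apply/(@continuousP _ (initial_topology (@^~ i))) => A [B oB <-].
have -> : h @^-1` ((@^~ i) @^-1` B) = (fun t => h t i) @^-1` B by [].
by move: oB; apply: (proj1 (continuousP _)).
Qed.

Lemma iter_Fn_mem (f : X -> X) (A : Fn X n) j a : a \in fn_set A ->
  iter j f a \in fn_set (iter j (Fn_map n f) A).
Proof.
move=> aA; elim: j => [//|j IH] /=.
by apply/imfsetP; exists (iter j f a).
Qed.

Lemma sing_subproof (x : X) : (0 < n)%N -> fnP n [fset x]%fset.
Proof. by move=> n0; rewrite /fnP cardfs1 n0. Qed.

Definition sing (x : X) (n0 : (0 < n)%N) : Fn X n := MkFn (sing_subproof x n0).

Lemma Fn_nonempty (A : Fn X n) : exists a, a \in fn_set A.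
Proof.
case: A => A /= /andP[A0 _]; move: A0; rewrite cardfs_gt0 => /fset0Pn[x xA].
by exists x.
Qed.

Lemma Fn_card1 (f : X -> X) (C : Fn X n) : (#|` fn_set C| == 1)%N ->
  (#|` fn_set (Fn_map n f C)| == 1)%N.
Proof.
move=> /eqP C1; have /andP[h0 _] := fn_setP (Fn_map n f C).
rewrite eqn_leq h0 andbT -C1.
exact: leq_imfset_card.
Qed.
End S.

Lemma dense_image (T U : topologicalType) (g : T -> U) (S : set T) :
  continuous g -> (forall u, exists t, g t = u) -> dense S -> dense (g @` S).
Proof.
move=> cg sg dS O [u Ou] oO.
have [t gt] := sg u.
have : (g @^-1` O) `&` S !=set0.
  apply: dS; first by exists t; rewrite /= gt.
  by move: oO; apply: (proj1 (continuousP _)).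
by case=> t' [Ot' St']; exists (g t'); split => //; exists t'.
Qed.

Lemma dense_sub (T : topologicalType) (S S' : set T) : S `<=` S' -> dense S -> dense S'.
Proof.
move=> SS dS O O0 oO; have [x [Ox Sx]] := dS O O0 oO.
by exists x; split => //; apply: SS.
Qed.


Local Open Scope quotient_scope.

Lemma SF_map_pi (R : realType) (X : metricType R) (n : nat) (f : X -> X) (A : Fn X n) :
  SF_map n f (\pi_(SF X n) A) = \pi_(SF X n) (Fn_map n f A).
Proof.
rewrite /SF_map; set C := repr _.
have : \pi_(SF X n) C = \pi_(SF X n) A by rewrite /C reprK.
move=> /eqmodP; rewrite /= /sfrel => /orP [/eqP -> //|/andP[c1 a1]].
apply/eqmodP; rewrite /= /sfrel.
by rewrite !Fn_card1 // orbT.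
Qed.

Lemma iter_SF_map (R : realType) (X : metricType R) (n : nat) (f : X -> X) (A : Fn X n) j :
  iter j (SF_map n f) (\pi_(SF X n) A) = \pi_(SF X n) (iter j (Fn_map n f) A).
Proof. by elim: j => [//|j IH] /=; rewrite IH SF_map_pi. Qed.

Unset Implicit Arguments.
Theorem theorem11 (R : realType) (X : metricType R) (n : nat) (f : X -> X) :
  continuum X -> (2 <= n)%N -> continuous f ->
  tri_mixing (Fn_map n f) ->
  tri_mixing f /\ tri_mixing (SF_map n f).
Proof.
move=> _ n2 _ hF.
have n0 : (0 < n)%N by apply: leq_trans n2.
split.
- move=> m m0 B Binf; have [Y [dY hY]] := hF m m0 B Binf.
  exists [set a | exists2 A, Y A & a \in fn_set A]; split.
  + move=> O [x Ox] oO.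
    pose W := [set D : Fn X n | forall d, d \in fn_set D -> O d].
    have nW : nbhs (sing x n0) W.
      apply: nbhs_fsub => c; rewrite /= inE => /eqP ->.
      by apply: open_nbhs_nbhs.
    have [D [iD YD]] : interior W `&` Y !=set0.
      by apply: dY; [exists (sing x n0)|exact: open_interior].
    have [d dD] := Fn_nonempty D.
    by exists d; split; [apply: (interior_subset iD)|exists D].
  + move=> a [A YA aA] O [p Op] oO.
    have [V [hV hVO]] := prod_nbhsP (open_nbhs_nbhs (conj oO Op)).
    pose P0 : {ptws 'I_m -> Fn X n} := fun i => sing (p i) n0.
    pose W := [set P : {ptws 'I_m -> Fn X n} |
                forall i, (fun i => [set D : Fn X n | forall d, d \in fn_set D -> V i d]) i (P i)].
    have nW : nbhs P0 W.
      apply: prod_nbhs_fin => i; apply: nbhs_fsub => c; rewrite /= inE => /eqP ->.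
      exact: hV.
    have [Q [iQ [k Bk kQ]]] := hY A YA (interior W) (ex_intro _ P0 nW) (@open_interior _ W).
    exists (fun i : 'I_m => iter ((i.+1) * k)%N f a); split; last by exists k.
    apply: hVO => i; have := interior_subset iQ i; rewrite -kQ /=; apply.
    exact: iter_Fn_mem.
- move=> m m0 B Binf; have [Y [dY hY]] := hF m m0 B Binf.
  exists (\pi_(SF X n) @` Y); split.
  + apply: dense_image dY; first exact: pi_continuous.
    by move=> u; exists (repr u); rewrite reprK.
  + move=> _ [A YA <-].
    pose Pi := fun (P : {ptws 'I_m -> Fn X n}) => (fun i => \pi_(SF X n) (P i)) : {ptws 'I_m -> SF X n}.
    apply: (@dense_sub _ (Pi @` [set (fun i : 'I_m => iter ((i.+1) * k)%N (Fn_map n f) A) | k in B])).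
      move=> _ [_ [k Bk <-] <-]; exists k => //.
      by apply: funext => i; rewrite /Pi iter_SF_map.
    apply: dense_image (hY A YA).
      apply: prod_continuous_into => i.
      move=> P; apply: (continuous_comp (@proj_continuous _ (fun=> Fn X n) i P)).
      exact: pi_continuous.
    move=> u; exists (fun i => repr (u i)).
    by apply: funext => i; rewrite /Pi reprK.
Qed.
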